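(* $\mathrm{Md}\cup\mathrm{Signs}$ is a finite complete axiomatisation of $\mathrm{Mod}_{\Sigma_{ms}}(\mathrm{Md}\cup\mathrm{Signs}\cup\mathrm{IL})$: for all $\Sigma_{ms}$-terms $r,s$, $\mathrm{Md}\cup\mathrm{Signs}\vdash r=s$ if and only if $r=s$ holds in every $\Sigma_{ms}$-structure satisfying $\mathrm{Md}$, $\mathrm{Signs}$ and $\mathrm{IL}$.
   Context: $\Sigma_{ms}=(0,1,+,\cdot,-,{}^{-1},\mathbf s)$ extends $\Sigma_m=(0,1,+,\cdot,-,{}^{-1})$ with a unary function $\mathbf s$. $\mathrm{Md}$ is the set of equations $(x+y)+z=x+(y+z)$, $x+y=y+x$, $x+0=x$, $x+(-x)=0$, $(x\cdot y)\cdot z=x\cdot(y\cdot z)$, $x\cdot y=y\cdot x$, $1\cdot x=x$, $x\cdot(y+z)=x\cdot y+x\cdot z$, $(x^{-1})^{-1}=x$, $x\cdot(x\cdot x^{-1})=x$. $1_t$ abbreviates $t\cdot t^{-1}$, $0_t$ abbreviates $1-1_t$, $t-u$ abbreviates $t+(-u)$. $\mathrm{Signs}$ is the set of equations: $\mathbf s(1_x)=1_x$; $\mathbf s(0_x)=0_x$; $\mathbf s(-1)=-1$; $\mathbf s(x^{-1})=\mathbf s(x)$; $\mathbf s(x\cdot y)=\mathbf s(x)\cdot\mathbf s(y)$; $0_{\mathbf s(x)-\mathbf s(y)}\cdot(\mathbf s(x+y)-\mathbf s(x))=0$. The inverse law $\mathrm{IL}$ is the conditional axiom $x\neq 0\rightarrow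 x\cdot x^{-1}=1$. $\vdash$ is derivability in equational logic. *)

(* Defs.v *)
From Stdlib Require Import List.
Import ListNotations.

Inductive term : Type :=
| Var  : nat -> term
| Zero : term
| One  : term
| Add  : term -> term -> term
| Mul  : term -> term -> term
| Neg  : term -> term
| Inv  : term -> term
| Sgn  : term -> term.

Fixpoint subst (sg : nat -> term) (t : term) : term :=
  match t with
  | Var n => sg n
  | Zero => Zero
  | One => One
  | Add a b => Add (subst sg a) (subst sg b)
  | Mul a b => Mul (subst sg a) (subst sg b)
  | Neg a => Neg (subst sg a)
  | Inv a => Inv (subst sg a)
  | Sgn a => Sgn (subst sg a)
  end.

Definition equation := (term * term)%type.

Inductive derivable (E : list equation) : term -> term -> Prop :=
| d_ax    : forall l r sg, In (l, r) E -> derivable E (subst sg l) (subst sg r)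
| d_refl  : forall t, derivable E t t
| d_sym   : forall t u, derivable E t u -> derivable E u t
| d_trans : forall t u v, derivable E t u -> derivable E u v -> derivable E t v
| d_add   : forall t t' u u', derivable E t t' -> derivable E u u' ->
              derivable E (Add t u) (Add t' u')
| d_mul   : forall t t' u u', derivable E t t' -> derivable E u u' ->
              derivable E (Mul t u) (Mul t' u')
| d_neg   : forall t t', derivable E t t' -> derivable E (Neg t) (Neg t')
| d_inv   : forall t t', derivable E t t' -> derivable E (Inv t) (Inv t')
| d_sgn   : forall t t', derivable E t t' -> derivable E (Sgn t) (Sgn t').

Record structure : Type := {
  carrier : Type;
  s_zero : carrier;
  s_one  : carrier;
  s_add  : carrier -> carrier -> carrier;
  s_mul  : carrier -> carrier -> carrier;
  s_neg  : carrier -> carrier;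
  s_inv  : carrier -> carrier;
  s_sgn  : carrier -> carrier
}.

Fixpoint eval (A : structure) (v : nat -> carrier A) (t : term) : carrier A :=
  match t with
  | Var n => v n
  | Zero => s_zero A
  | One => s_one A
  | Add a b => s_add A (eval A v a) (eval A v b)
  | Mul a b => s_mul A (eval A v a) (eval A v b)
  | Neg a => s_neg A (eval A v a)
  | Inv a => s_inv A (eval A v a)
  | Sgn a => s_sgn A (eval A v a)
  end.

Definition holds (A : structure) (t u : term) : Prop :=
  forall v : nat -> carrier A, eval A v t = eval A v u.

Definition satisfies (A : structure) (E : list equation) : Prop :=
  forall l r, In (l, r) E -> holds A l r.

Definition x : term := Var 0.
Definition y : term := Var 1.
Definition z : term := Var 2.
Definition one_ (t : term) : term := Mul t (Inv t).
Definition zero_ (t : term) : term := Add One (Neg (one_ t)).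
Definition Sub (t u : term) : term := Add t (Neg u).

Definition Md : list equation := [
  (Add (Add x y) z, Add x (Add y z));
  (Add x y, Add y x);
  (Add x Zero, x);
  (Add x (Neg x), Zero);
  (Mul (Mul x y) z, Mul x (Mul y z));
  (Mul x y, Mul y x);
  (Mul One x, x);
  (Mul x (Add y z), Add (Mul x y) (Mul x z));
  (Inv (Inv x), x);
  (Mul x (Mul x (Inv x)), x)
].

Definition Signs : list equation := [
  (Sgn (one_ x), one_ x);
  (Sgn (zero_ x), zero_ x);
  (Sgn (Neg One), Neg One);
  (Sgn (Inv x), Sgn x);
  (Sgn (Mul x y), Mul (Sgn x) (Sgn y));
  (Mul (zero_ (Sub (Sgn x) (Sgn y))) (Sub (Sgn (Add x y)) (Sgn x)), Zero)
].

Definition IL (A : structure) : Prop :=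
  forall a : carrier A, a <> s_zero A -> s_mul A a (s_inv A a) = s_one A.

(* Main.v *)
Require Import Defs.
From Stdlib Require Import List Classical ClassicalEpsilon FunctionalExtensionality PropExtensionality ProofIrrelevance Setoid Ring Cantor Arith Lia.
Require Import Defs.
Import ListNotations.

Section Quot.
Variable A : structure.
Variable R : carrier A -> carrier A -> Prop.
Hypothesis Rrefl : forall a, R a a.
Hypothesis Rsym : forall a b, R a b -> R b a.
Hypothesis Rtrans : forall a b c, R a b -> R b c -> R a c.
Hypothesis Radd : forall a a' b b', R a a' -> R b b' -> R (s_add A a b) (s_add A a' b').
Hypothesis Rmul : forall a a' b b', R a a' -> R b b' -> R (s_mul A a b) (s_mul A a' b').
Hypothesis Rneg : forall a a', R a a' -> R (s_neg A a) (s_neg A a').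
Hypothesis Rinv : forall a a', R a a' -> R (s_inv A a) (s_inv A a').
Hypothesis Rsgn : forall a a', R a a' -> R (s_sgn A a) (s_sgn A a').

Definition qc := {P : carrier A -> Prop | exists a, P = R a}.
Definition rep (q : qc) : carrier A :=
  proj1_sig (constructive_indefinite_description _ (proj2_sig q)).
Lemma rep_spec q : proj1_sig q = R (rep q).
Proof. unfold rep. destruct (constructive_indefinite_description _ _). simpl. exact e. Qed.
Definition pi (a : carrier A) : qc := exist _ (R a) (ex_intro _ a eq_refl).
Lemma qc_eq (q1 q2 : qc) : proj1_sig q1 = proj1_sig q2 -> q1 = q2.
Proof. destruct q1, q2; simpl; intros; subst; f_equal; apply proof_irrelevance. Qed.
Lemma pi_rep q : pi (rep q) = q.
Proof. apply qc_eq. simpl. symmetry. apply rep_spec. Qed.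
Lemma pi_eq a b : pi a = pi b <-> R a b.
Proof.
  split.
  - intro H. apply (f_equal (@proj1_sig _ _)) in H. simpl in H.
    rewrite H. apply Rrefl.
  - intro H. apply qc_eq. simpl. apply functional_extensionality. intro c.
    apply propositional_extensionality. split; eauto.
Qed.
Lemma rep_pi a : R a (rep (pi a)).
Proof. apply pi_eq. rewrite pi_rep. reflexivity. Qed.

Definition Quot : structure := {|
  carrier := qc;
  s_zero := pi (s_zero A);
  s_one := pi (s_one A);
  s_add := fun p q => pi (s_add A (rep p) (rep q));
  s_mul := fun p q => pi (s_mul A (rep p) (rep q));
  s_neg := fun p => pi (s_neg A (rep p));
  s_inv := fun p => pi (s_inv A (rep p));
  s_sgn := fun p => pi (s_sgn A (rep p)) |}.

Lemma eval_pi v t : eval Quot (fun n => pi (v n)) t = pi (eval A v t).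
Proof.
  induction t; simpl; try reflexivity;
  try (rewrite IHt1, IHt2; apply pi_eq; eauto using rep_pi);
  (rewrite IHt; apply pi_eq; eauto using rep_pi).
Qed.

Lemma eval_quot w t : eval Quot w t = pi (eval A (fun n => rep (w n)) t).
Proof.
  rewrite <- eval_pi. f_equal. apply functional_extensionality. intro n. symmetry. apply pi_rep.
Qed.

Lemma quot_holds l r : (forall v, R (eval A v l) (eval A v r)) -> holds Quot l r.
Proof. intros H w. rewrite !eval_quot. apply pi_eq. apply H. Qed.
End Quot.

Definition val3 {A : structure} (a b c : carrier A) : nat -> carrier A :=
  fun n => match n with 0 => a | 1 => b | _ => c end.

Lemma getax (A : structure) E (H : satisfies A E) i l r :
  nth_error E i = Some (l, r) -> forall v, eval A v l = eval A v r.
Proof. intros Hn v. apply H. eapply nth_error_In. exact Hn. Qed.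

Section Meadow.
Variable A : structure.
Hypothesis HM : satisfies A Md.
Hypothesis HS : satisfies A Signs.

Declare Scope M_scope.
Local Notation "a + b" := (s_add A a b) : M_scope.
Local Notation "a * b" := (s_mul A a b) : M_scope.
Local Notation "- a" := (s_neg A a) : M_scope.
Local Notation "a - b" := (s_add A a (s_neg A b)) : M_scope.
Local Notation "a ⁻¹" := (s_inv A a) (at level 2) : M_scope.
Local Notation "0" := (s_zero A) : M_scope.
Local Notation "1" := (s_one A) : M_scope.
Local Notation sg := (s_sgn A).
Local Open Scope M_scope.

Lemma addA a b c : (a + b) + c = a + (b + c).
Proof. exact (getax A Md HM 0 _ _ eq_refl (val3 a b c)). Qed.
Lemma addC a b : a + b = b + a.
Proof. exact (getax A Md HM 1 _ _ eq_refl (val3 a b a)). Qed.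
Lemma add0 a : a + 0 = a.
Proof. exact (getax A Md HM 2 _ _ eq_refl (val3 a a a)). Qed.
Lemma addN a : a + - a = 0.
Proof. exact (getax A Md HM 3 _ _ eq_refl (val3 a a a)). Qed.
Lemma mulA a b c : (a * b) * c = a * (b * c).
Proof. exact (getax A Md HM 4 _ _ eq_refl (val3 a b c)). Qed.
Lemma mulC a b : a * b = b * a.
Proof. exact (getax A Md HM 5 _ _ eq_refl (val3 a b a)). Qed.
Lemma mul1 a : 1 * a = a.
Proof. exact (getax A Md HM 6 _ _ eq_refl (val3 a a a)). Qed.
Lemma mulD a b c : a * (b + c) = a * b + a * c.
Proof. exact (getax A Md HM 7 _ _ eq_refl (val3 a b c)). Qed.
Lemma invK a : (a⁻¹)⁻¹ = a.
Proof. exact (getax A Md HM 8 _ _ eq_refl (val3 a a a)). Qed.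
Lemma mulinv a : a * (a * a⁻¹) = a.
Proof. exact (getax A Md HM 9 _ _ eq_refl (val3 a a a)). Qed.
Lemma sg_one a : sg (a * a⁻¹) = a * a⁻¹.
Proof. exact (getax A Signs HS 0 _ _ eq_refl (val3 a a a)). Qed.
Lemma sg_mul a b : sg (a * b) = sg a * sg b.
Proof. exact (getax A Signs HS 4 _ _ eq_refl (val3 a b a)). Qed.

Lemma mring : ring_theory 0 1 (s_add A) (s_mul A) (fun a b => a - b) (s_neg A) eq.
Proof.
  constructor; intros.
  - rewrite addC; apply add0.
  - apply addC.
  - symmetry; apply addA.
  - apply mul1.
  - apply mulC.
  - symmetry; apply mulA.
  - rewrite mulC, mulD, (mulC z), (mulC z). reflexivity.
  - reflexivity.
  - apply addN.
Qed.
Add Ring MR : mring.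

Lemma pinv_uniq a b c : a * (a * b) = a -> b * (b * a) = b ->
  a * (a * c) = a -> c * (c * a) = c -> b = c.
Proof.
  intros h1 h2 h3 h4.
  assert (E1 : b * a = a * c).
  { transitivity (b * (a * (a * c))). rewrite h3; reflexivity.
    transitivity ((a * (a * b)) * c). ring. rewrite h1. reflexivity. }
  rewrite <- h2, <- h4. rewrite E1.
  transitivity ((b * a) * c). ring. rewrite E1. ring.
Qed.

Lemma inv_pinv a : a⁻¹ * (a⁻¹ * a) = a⁻¹.
Proof. rewrite <- (invK a) at 3. apply mulinv. Qed.

Lemma inv_mul a b : (a * b)⁻¹ = a⁻¹ * b⁻¹.
Proof.
  apply (pinv_uniq (a * b)).
  - apply mulinv.
  - apply inv_pinv.
  - transitivity ((a * (a * a⁻¹)) * (b * (b * b⁻¹))). ring.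
    rewrite !mulinv. reflexivity.
  - transitivity ((a⁻¹ * (a⁻¹ * a)) * (b⁻¹ * (b⁻¹ * b))). ring.
    rewrite !inv_pinv. reflexivity.
Qed.

Lemma inv_idem e : e * e = e -> e⁻¹ = e.
Proof.
  intro h. apply (pinv_uniq e).
  - apply mulinv.
  - apply inv_pinv.
  - rewrite h, h; reflexivity.
  - rewrite h, h; reflexivity.
Qed.

Lemma sg_idem e : e * e = e -> sg e = e.
Proof.
  intro h. assert (E : e * e⁻¹ = e) by (rewrite inv_idem; auto).
  rewrite <- E at 1. rewrite sg_one. exact E.
Qed.

Lemma one_idem a : (a * a⁻¹) * (a * a⁻¹) = a * a⁻¹.
Proof.
  transitivity ((a * (a * a⁻¹)) * a⁻¹). ring. rewrite mulinv. reflexivity.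
Qed.

Lemma mul0 a : a * 0 = 0.
Proof.
  assert (h : a * 0 + a * 0 = a * 0 + 0) by (rewrite <- mulD; ring).
  transitivity (- (a * 0) + (a * 0 + a * 0)). ring. rewrite h. ring.
Qed.

Lemma sub_eq0 a b : a - b = 0 -> a = b.
Proof. intro h. transitivity ((a - b) + b). ring. rewrite h. ring. Qed.

Variable enum : nat -> carrier A.
Hypothesis enum_surj : forall a, exists n, enum n = a.
Variable d : carrier A.
Hypothesis dnz : d <> 0.

Fixpoint chain (n : nat) : carrier A :=
  match n with
  | O => d * d⁻¹
  | S n => let e := chain n in let c := enum n in
      if excluded_middle_informative (e * (c * c⁻¹) = 0) then e * (1 - c * c⁻¹)
      else e * (c * c⁻¹)
  end.

Lemma idem_mul e f : e * e = e -> f * f = f -> (e * f) * (e * f) = e * f.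
Proof. intros h1 h2. transitivity ((e * e) * (f * f)). ring. rewrite h1, h2. reflexivity. Qed.
Lemma idem_compl f : f * f = f -> (1 - f) * (1 - f) = 1 - f.
Proof. intro h. transitivity (1 - f - f + f * f). ring. rewrite h. ring. Qed.

Lemma chain_prop n : chain n * chain n = chain n /\ chain n <> 0.
Proof.
  induction n as [|n [IH1 IH2]]; simpl.
  - split. apply one_idem. intro h. apply dnz. rewrite <- (mulinv d), h. apply mul0.
  - destruct excluded_middle_informative as [h|h].
    + split.
      * apply idem_mul; auto. apply idem_compl, one_idem.
      * intro h2. apply IH2.
        transitivity (chain n * (1 - enum n * (enum n)⁻¹) + chain n * (enum n * (enum n)⁻¹)).
        ring. rewrite h, h2. ring.
    + split; auto. apply idem_mul; auto. apply one_idem.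
Qed.

Lemma chain_step n : exists f, chain (S n) = chain n * f.
Proof. simpl. destruct excluded_middle_informative; eexists; reflexivity. Qed.

Lemma chain_le n m : n <= m -> chain m * chain n = chain m.
Proof.
  induction 1.
  - apply chain_prop.
  - destruct (chain_step m) as [f hf]. rewrite hf.
    transitivity ((chain m * chain n) * f). ring. rewrite IHle. reflexivity.
Qed.

Definition Rc a b := exists n, a * chain n = b * chain n.

Lemma Rc_max a b n m : a * chain n = b * chain n -> n <= m -> a * chain m = b * chain m.
Proof.
  intros h hle. rewrite <- (chain_le n m hle).
  transitivity ((a * chain n) * chain m). ring. rewrite h. ring.
Qed.

Lemma Rc_refl a : Rc a a.
Proof. exists O. reflexivity. Qed.
Lemma Rc_sym a b : Rc a b -> Rc b a.
Proof. intros [n h]. exists n. auto. Qed.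
Lemma Rc_trans a b c : Rc a b -> Rc b c -> Rc a c.
Proof.
  intros [n h1] [m h2]. exists (Nat.max n m).
  rewrite (Rc_max a b n _ h1 (PeanoNat.Nat.le_max_l n m)).
  apply (Rc_max b c m _ h2 (PeanoNat.Nat.le_max_r n m)).
Qed.
Lemma Rc_add a a' b b' : Rc a a' -> Rc b b' -> Rc (a + b) (a' + b').
Proof.
  intros [n h1] [m h2]. exists (Nat.max n m).
  pose proof (Rc_max _ _ n _ h1 (PeanoNat.Nat.le_max_l n m)) as g1.
  pose proof (Rc_max _ _ m _ h2 (PeanoNat.Nat.le_max_r n m)) as g2.
  rewrite (mulC (a + b)), (mulC (a' + b')), !mulD, !(mulC (chain _)), g1, g2. reflexivity.
Qed.
Lemma Rc_mul a a' b b' : Rc a a' -> Rc b b' -> Rc (a * b) (a' * b').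
Proof.
  intros [n h1] [m h2]. exists (Nat.max n m).
  pose proof (Rc_max _ _ n _ h1 (PeanoNat.Nat.le_max_l n m)) as g1.
  pose proof (Rc_max _ _ m _ h2 (PeanoNat.Nat.le_max_r n m)) as g2.
  set (e := chain (Nat.max n m)) in *.
  assert (he : e * e = e) by apply chain_prop.
  transitivity ((a * e) * (b * e)). rewrite <- he at 1. ring.
  rewrite g1, g2. rewrite <- he at 3. ring.
Qed.
Lemma Rc_neg a a' : Rc a a' -> Rc (- a) (- a').
Proof.
  intros [n h]. exists n.
  transitivity (- (a * chain n)). ring. rewrite h. ring.
Qed.
Lemma Rc_inv a a' : Rc a a' -> Rc a⁻¹ a'⁻¹.
Proof.
  intros [n h]. exists n.
  assert (he : (chain n)⁻¹ = chain n) by (apply inv_idem, chain_prop).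
  rewrite <- he, <- !inv_mul, h. reflexivity.
Qed.
Lemma Rc_sgn a a' : Rc a a' -> Rc (sg a) (sg a').
Proof.
  intros [n h]. exists n.
  assert (he : sg (chain n) = chain n) by (apply sg_idem, chain_prop).
  rewrite <- he, <- !sg_mul, h. reflexivity.
Qed.

Lemma Rc_IL a : ~ Rc a 0 -> Rc (a * a⁻¹) 1.
Proof.
  intro hn. destruct (enum_surj a) as [n hn']. subst a.
  exists (S n). simpl. destruct excluded_middle_informative as [h|h].
  - exfalso. apply hn. exists (S n). simpl.
    destruct excluded_middle_informative as [_|h']; [|contradiction].
    transitivity (chain n * (enum n - enum n * (enum n * (enum n)⁻¹))). ring.
    rewrite mulinv. transitivity (chain n * 0). f_equal. ring. rewrite mul0. ring.
  - transitivity (chain n * ((enum n * (enum n)⁻¹) * (enum n * (enum n)⁻¹))). ring.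
    rewrite one_idem. ring.
Qed.

Lemma Rc_sep a b : d = a - b -> ~ Rc a b.
Proof.
  intros hd [n h]. apply (proj2 (chain_prop n)).
  rewrite <- (chain_le 0 n (le_0_n n)). simpl.
  transitivity (((a - b) * chain n) * d⁻¹). rewrite hd. ring.
  transitivity ((a * chain n - b * chain n) * d⁻¹). ring.
  rewrite h. rewrite (addN (b * chain n)), mulC. apply mul0.
Qed.
End Meadow.

Definition TS : structure := {|
  carrier := term; s_zero := Zero; s_one := One; s_add := Add; s_mul := Mul;
  s_neg := Neg; s_inv := Inv; s_sgn := Sgn |}.

Lemma eval_TS v t : eval TS v t = subst v t.
Proof. induction t; simpl; congruence. Qed.

Lemma subst_var t : subst Var t = t.
Proof. induction t; simpl; congruence. Qed.

Lemma eval_subst A v sg t : eval A v (subst sg t) = eval A (fun n => eval A v (sg n)) t.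
Proof. induction t; simpl; congruence. Qed.

Fixpoint lev (k : nat) : list term :=
  match k with
  | O => [Zero; One]
  | S k => let L := lev k in
      L ++ Var k :: map (fun p => Add (fst p) (snd p)) (list_prod L L)
        ++ map (fun p => Mul (fst p) (snd p)) (list_prod L L)
        ++ map Neg L ++ map Inv L ++ map Sgn L
  end.

Lemma lev_mono t k m : In t (lev k) -> k <= m -> In t (lev m).
Proof.
  intros h hle. induction hle; auto. simpl. apply in_or_app. auto.
Qed.

Lemma lev_all t : exists k, In t (lev k).
Proof.
  induction t.
  - exists (S n). simpl. apply in_or_app. right. left. reflexivity.
  - exists O. simpl. auto.
  - exists O. simpl. auto.
  - destruct IHt1 as [k1 h1], IHt2 as [k2 h2]. exists (S (Nat.max k1 k2)). simpl.
    apply in_or_app. right. right. apply in_or_app. left.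
    apply (in_map (fun p => Add (fst p) (snd p)) _ (t1, t2)). apply in_prod;
    eapply lev_mono; eauto; lia.
  - destruct IHt1 as [k1 h1], IHt2 as [k2 h2]. exists (S (Nat.max k1 k2)). simpl.
    apply in_or_app. right. right. apply in_or_app. right. apply in_or_app. left.
    apply (in_map (fun p => Mul (fst p) (snd p)) _ (t1, t2)). apply in_prod;
    eapply lev_mono; eauto; lia.
  - destruct IHt as [k h]. exists (S k). simpl.
    apply in_or_app. right. right. apply in_or_app. right. apply in_or_app. right.
    apply in_or_app. left. apply in_map. auto.
  - destruct IHt as [k h]. exists (S k). simpl.
    apply in_or_app. right. right. apply in_or_app. right. apply in_or_app. right.
    apply in_or_app. right. apply in_or_app. left. apply in_map. auto.
  - destruct IHt as [k h]. exists (S k). simpl.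
    apply in_or_app. right. right. apply in_or_app. right. apply in_or_app. right.
    apply in_or_app. right. apply in_or_app. right. apply in_map. auto.
Qed.

Definition enum_term (n : nat) : term :=
  let (i, k) := Cantor.of_nat n in nth i (lev k) Zero.

Lemma enum_term_surj t : exists n, enum_term n = t.
Proof.
  destruct (lev_all t) as [k h]. destruct (In_nth _ _ Zero h) as [i [_ hi]].
  exists (Cantor.to_nat (i, k)). unfold enum_term. rewrite Cantor.cancel_of_to. exact hi.
Qed.

Lemma soundness E A r s : derivable E r s -> satisfies A E -> holds A r s.
Proof.
  intros hd hA. induction hd; intro w; simpl; try congruence.
  rewrite !eval_subst. apply hA. exact H.
Qed.

Theorem corollary2 : forall r s : term,
  derivable (Md ++ Signs) r s <->
  (forall A : structure, satisfies A Md -> satisfies A Signs -> IL A -> holds A r s).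
Proof.
  intros r s. split.
  - intros hd A hM hS _. apply (soundness _ _ _ _ hd).
    intros l r' hin. apply in_app_or in hin. destruct hin; auto.
  - intro H. apply NNPP. intro hnd.
    set (DR := derivable (Md ++ Signs)).
    assert (D1 : forall a, DR a a) by (intros; apply d_refl).
    assert (D2 : forall a b, DR a b -> DR b a) by (intros; apply d_sym; auto).
    assert (D3 : forall a b c, DR a b -> DR b c -> DR a c) by (intros; eapply d_trans; eauto).
    assert (D4 : forall a a' b b', DR a a' -> DR b b' -> DR (s_add TS a b) (s_add TS a' b'))
      by (intros; apply d_add; auto).
    assert (D5 : forall a a' b b', DR a a' -> DR b b' -> DR (s_mul TS a b) (s_mul TS a' b'))
      by (intros; apply d_mul; auto).
    assert (D6 : forall a a', DR a a' -> DR (s_neg TS a) (s_neg TS a')) by (intros; apply d_neg; auto).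
    assert (D7 : forall a a', DR a a' -> DR (s_inv TS a) (s_inv TS a')) by (intros; apply d_inv; auto).
    assert (D8 : forall a a', DR a a' -> DR (s_sgn TS a) (s_sgn TS a')) by (intros; apply d_sgn; auto).
    set (Q := Quot TS DR).
    assert (QE : forall l r', In (l, r') (Md ++ Signs) -> holds Q l r').
    { intros l r' hin. apply (quot_holds TS DR D1 D2 D3 D4 D5 D6 D7 D8).
      intro v. rewrite !eval_TS. apply d_ax. exact hin. }
    assert (QM : satisfies Q Md) by (intros l r' hin; apply QE, in_or_app; auto).
    assert (QS : satisfies Q Signs) by (intros l r' hin; apply QE, in_or_app; auto).
    set (piQ := pi TS DR).
    set (enum := fun n => piQ (enum_term n)).
    assert (esurj : forall q : carrier Q, exists n, enum n = q).
    { intro q. destruct (enum_term_surj (rep TS DR q)) as [n hn]. exists n.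
      unfold enum, piQ. rewrite hn. apply pi_rep. }
    set (d := s_add Q (piQ r) (s_neg Q (piQ s))).
    assert (dnz : d <> s_zero Q).
    { intro h. apply hnd. apply (pi_eq TS DR D1 D2 D3). exact (sub_eq0 Q QM _ _ h). }
    set (RC := Rc Q enum d).
    assert (C1 : forall a, RC a a) by (apply Rc_refl).
    assert (C2 : forall a b, RC a b -> RC b a) by (apply Rc_sym).
    assert (C3 : forall a b c, RC a b -> RC b c -> RC a c) by (apply Rc_trans; auto).
    assert (C4 : forall a a' b b', RC a a' -> RC b b' -> RC (s_add Q a b) (s_add Q a' b'))
      by (apply Rc_add; auto).
    assert (C5 : forall a a' b b', RC a a' -> RC b b' -> RC (s_mul Q a b) (s_mul Q a' b'))
      by (apply Rc_mul; auto).
    assert (C6 : forall a a', RC a a' -> RC (s_neg Q a) (s_neg Q a')) by (apply Rc_neg; auto).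
    assert (C7 : forall a a', RC a a' -> RC (s_inv Q a) (s_inv Q a')) by (apply Rc_inv; auto).
    assert (C8 : forall a a', RC a a' -> RC (s_sgn Q a) (s_sgn Q a')) by (apply Rc_sgn; auto).
    set (B := Quot Q RC).
    assert (BE : forall E, satisfies Q E -> satisfies B E).
    { intros E hE l r' hin. apply (quot_holds Q RC C1 C2 C3 C4 C5 C6 C7 C8).
      intro v. rewrite (hE l r' hin v). apply C1. }
    assert (BIL : IL B).
    { intros q hq. rewrite <- (pi_rep Q RC q).
      set (a := rep Q RC q). simpl. apply (pi_eq Q RC C1 C2 C3).
      eapply C3; [| apply (Rc_IL Q QM enum esurj d a)].
      - apply C5. apply C2, rep_pi; auto.
        eapply C3. apply C2, rep_pi; auto. apply C7. apply C2, rep_pi; auto.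
      - intro hr. apply hq. rewrite <- (pi_rep Q RC q). fold a.
        apply (pi_eq Q RC C1 C2 C3). exact hr. }
    specialize (H B (BE _ QM) (BE _ QS) BIL (fun n => pi Q RC (piQ (Var n)))).
    rewrite !(eval_pi Q RC C1 C2 C3 C4 C5 C6 C7 C8) in H.
    assert (EQ : forall t, eval Q (fun n => piQ (Var n)) t = piQ t).
    { intro t. unfold piQ. rewrite (eval_pi TS DR D1 D2 D3 D4 D5 D6 D7 D8).
      rewrite eval_TS, subst_var. reflexivity. }
    rewrite !EQ in H. apply (pi_eq Q RC C1 C2 C3) in H.
    exact (Rc_sep Q QM enum d dnz _ _ eq_refl H).
Qed.
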